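(* Let $k_1,k_2\in\frac12\mathbb Z$, let $B_1,B_2$ be positive definite symmetric bilinear forms on a real vector space $V$, and let $L$ be a lattice in $V$ which is integral for both $B_1$ and $B_2$. Let $G\le\mathrm{SL}_2(\mathbb Z)$ have finite index, and for $i=1,2$ let $\chi_i$ be a linear character of $\widetilde G\ltimes H((L,B_i),1)$ with finite-index kernel and $\chi_i(([0,0],\xi))=\xi$. Let $f_1,f_2:\mathbb H\times\mathcal V\to\mathbb C$. Then: (1) the map $\chi_1*\chi_2:\widetilde G\ltimes H((L,B_1+B_2),1)\to\mathbb C^\times$, $(\gamma,\varepsilon\sqrt{c\tau+d},[v,w],\xi)\mapsto\xi\,\chi_1(\gamma,\varepsilon\sqrt{c\tau+d},[v,w],1)\,\chi_2(\gamma,\varepsilon\sqrt{c\tau+d},[v,w],1)$ is a linear character; (2) if $f_i\in J_{k_i,(L,B_i)}(G,\chi_i)$ for $i=1,2$, then $f_1f_2\in J_{k_1+k_2,(L,B_1+B_2)}(G,\chi_1*\chi_2)$; moreover if one of $f_1,f_2$ is a Jacobi cusp form, so is $f_1f_2$.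
   Context: $e(x)=\exp(2\pi ix)$, $q^n=e(n\tau)$, $\tau\in\mathbb H$, $\mathcal V=V\oplus iV$. For a form $B'$ on $V$ (extended $\mathbb C$-bilinearly) with $Q'(v)=\frac12B'(v,v)$, integral on $L$ ($B'(L,L)\subseteq\mathbb Z$), dual lattice $L'^\sharp=\{v:B'(v,L)\subseteq\mathbb Z\}$: the metaplectic group consists of pairs $(\gamma,\varepsilon\sqrt{c\tau+d})$, $\gamma=\begin{pmatrix}a&b\\c&d\end{pmatrix}$, $\varepsilon=\pm1$, principal branch, product $(\gamma_1,\phi_1)(\gamma_2,\phi_2)=(\gamma_1\gamma_2,\phi_1(\gamma_2\tau)\phi_2(\tau))$; $\widetilde G$ is the preimage of $G$. $H((L,B'),1)$ consists of $([v,w],\xi)$, $v,w\in L$, $\xi=\pm1$, product $([v_1,w_1],\xi_1)([v_2,w_2],\xi_2)=([v_1+v_2,w_1+w_2],\xi_1\xi_2e^{\pi i(B'(v_1,w_2)-B'(v_2,w_1))})$; the semidirect product uses the right action $[v,w]\gamma=[av+cw,bv+dw]$ (elements $(\gamma,\varepsilon\sqrt{c\tau+d},[v,w],\xi)$ being products $\gamma\cdot([v,w],\xi)$). Slash: $(f|_{k,B'}g)(\tau,z)=(\varepsilon\sqrt{c\tau+d})^{-2k}\xi\,e(-\frac{cQ'(z+\tau v+w)}{c\tau+d}+\tau Q'(v)+B'(v,z)+\frac12B'(v,w))f(\frac{a\tau+b}{c\tau+d},\frac{z+\tau v+w}{c\tau+d})$. $J_{k,(L,B')}(G,\chi)$ is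 the space of holomorphic $f$ with $f|_{k,B'}g=\chi(g)f$ for $g\in\widetilde G\ltimes H((L,B'),1)$ such that for each $g\in\widetilde{\mathrm{SL}_2(\mathbb Z)}\ltimes H((L,B'),1)$ the (normally convergent) expansion $f|_{k,B'}g=\sum c(n,t)q^ne(B'(t,z))$ satisfies $c(n,t)=0$ unless $n\ge Q'(t)$; $f$ is a Jacobi cusp form if moreover $c(n,t)=0$ unless $n>Q'(t)$. *)

(* Defs.v *)
From HB Require Import structures.
From mathcomp Require Import all_boot all_order all_algebra.
From mathcomp Require Import all_classical all_reals all_analysis.
From mathcomp Require Import complex.
Import Order.TTheory GRing.Theory Num.Theory.
Import numFieldNormedType.Exports.

Set Implicit Arguments.
Unset Strict Implicit.
Unset Printing Implicit Defensive.

Local Open Scope ring_scope.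

Section Jacobi.
Variable R : realType.
Variable n : nat.

Local Notation C := (R[i]).

(** the domain C x C^n (tau, z) as a normed C-module; H x V-cal is the part
    with Im tau > 0 *)
Definition CV : normedModType C := ((C^o) * 'rV[C]_n)%type.

Definition toC (x : R) : C := Complex x 0.
Definition cre (z : C) : R := complex.Re z.
Definition cim (z : C) : R := complex.Im z.
Definition cabs (z : C) : R := Num.sqrt (cre z ^+ 2 + cim z ^+ 2).
Definition ci : C := Complex 0 1.

Definition cexp (z : C) : C :=
  toC (expR (cre z)) * Complex (cos (cim z)) (sin (cim z)).
Definition ee (z : C) : C := cexp (ci * toC (2 * pi) * z).

(** principal branch of the square root (argument in (-pi/2, pi/2]) *)
Definition psqrt (z : C) : C :=
  Complex (Num.sqrt ((cabs z + cre z) / 2))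
          ((if cim z < 0 then -1 else 1) * Num.sqrt ((cabs z - cre z) / 2)).

(** real vectors, the lattice L = Z-span of the rows of an invertible basis
    matrix Bs, bilinear forms given by matrices *)
Definition cv (v : 'rV[R]_n) : 'rV[C]_n := map_mx toC v.
Definition inL (Bs : 'M[R]_n) (v : 'rV[R]_n) : Prop :=
  exists x : 'rV[int]_n, v = map_mx (fun m : int => m%:~R) x *m Bs.
Definition Bil (S : 'M[R]_n) (v w : 'rV[R]_n) : R := (v *m S *m w^T) 0 0.
Definition Qr (S : 'M[R]_n) (v : 'rV[R]_n) : R := Bil S v v / 2.
(** C-bilinear extension B' and Q' on V-cal = V + iV *)
Definition BilC (S : 'M[R]_n) (z w : 'rV[C]_n) : C := (z *m map_mx toC S *m w^T) 0 0.
Definition QC (S : 'M[R]_n) (z : 'rV[C]_n) : C := BilC S z z / 2.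

Definition sym_posdef (S : 'M[R]_n) : Prop :=
  S^T = S /\ forall v : 'rV[R]_n, v != 0 -> 0 < Bil S v v.
Definition integral_on (S Bs : 'M[R]_n) : Prop :=
  forall v w, inL Bs v -> inL Bs w -> exists m : int, Bil S v w = m%:~R.

Definition i0 : 'I_2 := ord0.
Definition i1 : 'I_2 := ord_max.
Definition ma (g : 'M[int]_2) := g i0 i0.
Definition mb (g : 'M[int]_2) := g i0 i1.
Definition mc (g : 'M[int]_2) := g i1 i0.
Definition md (g : 'M[int]_2) := g i1 i1.
Definition inSL2 (g : 'M[int]_2) : Prop := \det g = 1.
Definition mob (g : 'M[int]_2) (t : C) : C :=
  ((ma g)%:~R * t + (mb g)%:~R) / ((mc g)%:~R * t + (md g)%:~R).

(** finite-index subgroup G of SL_2(Z) (inverse of g in SL_2(Z) is \adj g) *)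
Definition fi_subgroup (G : 'M[int]_2 -> Prop) : Prop :=
  [/\ forall g, G g -> inSL2 g,
      G 1%:M,
      forall g h, G g -> G h -> G (g *m h),
      forall g, G g -> G (\adj g)
    & exists (m : nat) (h : 'I_m -> 'M[int]_2),
        forall g, inSL2 g -> exists i, G (\adj (h i) *m g)].

(** elements (gamma, eps sqrt(c tau + d), [v,w], xi) of Mp_2 |x H((L,B),1) *)
Record jelt := JE { el_g : 'M[int]_2; el_eps : C; el_v : 'rV[R]_n;
                    el_w : 'rV[R]_n; el_xi : C }.

Definition pm1 (x : C) : Prop := x = 1 \/ x = -1.

Definition in_grp (G : 'M[int]_2 -> Prop) (Bs : 'M[R]_n) (x : jelt) : Prop :=
  [/\ G (el_g x) /\ inSL2 (el_g x), pm1 (el_eps x), inL Bs (el_v x),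
      inL Bs (el_w x) & pm1 (el_xi x)].

Definition mpf (g : 'M[int]_2) (eps : C) (t : C) : C :=
  eps * psqrt ((mc g)%:~R * t + (md g)%:~R).

(** metaplectic product: (g1,phi1)(g2,phi2) = (g1 g2, phi1(g2 tau) phi2(tau));
    the sign of the product is read off at tau = i *)
Definition mp_eps (g1 : 'M[int]_2) (e1 : C) (g2 : 'M[int]_2) (e2 : C) : C :=
  mpf g1 e1 (mob g2 ci) * mpf g2 e2 ci / mpf (g1 *m g2) 1 ci.

Definition actv (v w : 'rV[R]_n) (g : 'M[int]_2) : 'rV[R]_n :=
  (ma g)%:~R *: v + (mc g)%:~R *: w.
Definition actw (v w : 'rV[R]_n) (g : 'M[int]_2) : 'rV[R]_n :=
  (mb g)%:~R *: v + (md g)%:~R *: w.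

(** product in Mp_2 |x H((L,B),1), B given by S:
    (g1 h1)(g2 h2) = (g1 g2) ((h1 g2) h2) *)
Definition jmul (S : 'M[R]_n) (x y : jelt) : jelt :=
  let v1 := actv (el_v x) (el_w x) (el_g y) in
  let w1 := actw (el_v x) (el_w x) (el_g y) in
  JE (el_g x *m el_g y) (mp_eps (el_g x) (el_eps x) (el_g y) (el_eps y))
     (v1 + el_v y) (w1 + el_w y)
     (el_xi x * el_xi y *
        cexp (toC pi * ci * toC (Bil S v1 (el_w y) - Bil S (el_v y) w1))).

Definition is_lin_char (S Bs : 'M[R]_n) (G : 'M[int]_2 -> Prop) (chi : jelt -> C) : Prop :=
  (forall x, in_grp G Bs x -> chi x != 0) /\
  (forall x y, in_grp G Bs x -> in_grp G Bs y -> chi (jmul S x y) = chi x * chi y).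

Definition fi_kernel (S Bs : 'M[R]_n) (G : 'M[int]_2 -> Prop) (chi : jelt -> C) : Prop :=
  exists (m : nat) (h : 'I_m -> jelt), (forall i, in_grp G Bs (h i)) /\
    forall x, in_grp G Bs x ->
      exists i k, [/\ in_grp G Bs k, chi k = 1 & x = jmul S (h i) k].

Definition center_cond (chi : jelt -> C) : Prop :=
  forall xi, pm1 xi -> chi (JE 1%:M 1 0 0 xi) = xi.

Definition chi_star (chi1 chi2 : jelt -> C) (x : jelt) : C :=
  el_xi x * chi1 (JE (el_g x) (el_eps x) (el_v x) (el_w x) 1)
          * chi2 (JE (el_g x) (el_eps x) (el_v x) (el_w x) 1).

(** slash operator f |_{k,B} g, with the weight k = k2 / 2, k2 : int *)
Definition slash (k2 : int) (S : 'M[R]_n) (f : CV -> C) (x : jelt) (p : CV) : C :=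
  let g := el_g x in
  let t : C := p.1 in
  let z : 'rV[C]_n := p.2 in
  let j : C := (mc g)%:~R * t + (md g)%:~R in
  let v := cv (el_v x) in
  let w := cv (el_w x) in
  let u := z + t *: v + w in
  (mpf g (el_eps x) t) ^ (- k2) * el_xi x *
  ee (- ((mc g)%:~R * QC S u / j) + t * QC S v + BilC S v z + BilC S v w / 2) *
  f (mob g t, j^-1 *: u).

Definition Hdom (p : CV) : Prop := 0 < cim p.1.

Definition holo (f : CV -> C) : Prop :=
  forall p, Hdom p -> differentiable (f : CV -> C^o) p.

(** F has a normally convergent expansion
      F(tau,z) = sum c(n,t) q^n e(B'(t,z))
    (indexed by a countable family of exponents (n_k, t_k)) whose
    coefficients satisfy c(n,t) = 0 unless P n t *)
Definition has_expansion (S : 'M[R]_n) (F : CV -> C) (P : R -> 'rV[R]_n -> Prop) : Prop :=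
  exists (c : nat -> C) (nn : nat -> R) (tt : nat -> 'rV[R]_n),
    let term k (p : CV) := c k * ee (toC (nn k) * p.1 + BilC S (cv (tt k)) p.2) in
    [/\ forall k, c k != 0 -> P (nn k) (tt k),
        (* normal convergence on compact subsets of H x V-cal *)
        forall K : set CV, compact K -> (forall p, K p -> Hdom p) ->
          exists M : nat -> R,
            (forall k p, K p -> cabs (term k p) <= M k) /\
            exists Mb : R, forall N, \sum_(k < N) M k <= Mb
      &
        forall p, Hdom p -> forall e : R, 0 < e -> exists N0 : nat,
          forall N, (N0 <= N)%N -> cabs (F p - \sum_(k < N) term k p) < e].

Definition jacobi_form (k2 : int) (S Bs : 'M[R]_n) (G : 'M[int]_2 -> Prop)
    (chi : jelt -> C) (f : CV -> C) : Prop :=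
  [/\ holo f,
      forall x, in_grp G Bs x -> forall p, Hdom p -> slash k2 S f x p = chi x * f p
    & forall x, in_grp inSL2 Bs x ->
        has_expansion S (slash k2 S f x) (fun m t => Qr S t <= m)].

Definition jacobi_cusp_form (k2 : int) (S Bs : 'M[R]_n) (G : 'M[int]_2 -> Prop)
    (chi : jelt -> C) (f : CV -> C) : Prop :=
  [/\ holo f,
      forall x, in_grp G Bs x -> forall p, Hdom p -> slash k2 S f x p = chi x * f p
    & forall x, in_grp inSL2 Bs x ->
        has_expansion S (slash k2 S f x) (fun m t => Qr S t < m)].

End Jacobi.

(* Main.v *)
Require Import Defs.
From HB Require Import structures.
From mathcomp Require Import all_boot all_order all_algebra.
From mathcomp Require Import all_classical all_reals all_analysis.
From mathcomp Require Import complex.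
From mathcomp Require Import zify ring lra.
From Stdlib Require PeanoNat.
Import Order.TTheory GRing.Theory Num.Theory.
Import numFieldNormedType.Exports.
Local Open Scope classical_set_scope.
Local Open Scope ring_scope.

Lemma cabsE {R : realType} (z : R[i]) : ((cabs z)%:C)%C = `|z|.
Proof. by rewrite normc_def. Qed.

Lemma cabs_ge0 {R : realType} (z : R[i]) : 0 <= cabs z.
Proof. exact: sqrtr_ge0. Qed.

Lemma cabsM {R : realType} (a b : R[i]) : cabs (a * b) = cabs a * cabs b.
Proof. by apply: complexI; rewrite rmorphM /= !cabsE normrM. Qed.

Lemma cabsD {R : realType} (a b : R[i]) : cabs (a + b) <= cabs a + cabs b.
Proof. by have := ler_normD a b; rewrite -!cabsE -rmorphD lecR. Qed.

Lemma cabsN {R : realType} (a : R[i]) : cabs (- a) = cabs a.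
Proof. by apply: complexI; rewrite !cabsE normrN. Qed.

Lemma cabs1 {R : realType} : cabs (1 : R[i]) = 1.
Proof. by apply: complexI; rewrite !cabsE normr1. Qed.

Lemma cabs_sum {R : realType} (I : Type) (r : seq I) (F : I -> R[i]) :
  cabs (\sum_(i <- r) F i) <= \sum_(i <- r) cabs (F i).
Proof.
elim: r => [|x r IH]; first by rewrite !big_nil /cabs /cre /cim /= expr0n /= addr0 sqrtr0.
by rewrite !big_cons (le_trans (cabsD _ _)) // lerD2l.
Qed.

Lemma cabs_pm1 {R : realType} (x : R[i]) : pm1 x -> cabs x = 1.
Proof. by case=> ->; rewrite ?cabsN cabs1. Qed.
Definition sig2 (k : nat) : nat * nat :=
  let P := Nat.sqrt k in let r := (k - P * P)%N in
  if (r <= P)%N then (P, r) else ((r - P.+1)%N, P).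

Lemma sqrt_sq Q r : (r <= Q + Q)%N -> Nat.sqrt (Q * Q + r) = Q.
Proof. move=> h; apply: PeanoNat.Nat.sqrt_unique; split; lia. Qed.

Lemma sig2_a Q r : (r <= Q)%N -> sig2 (Q * Q + r) = (Q, r).
Proof.
move=> h; rewrite /sig2 sqrt_sq; last lia.
have -> : (Q * Q + r - Q * Q = r)%N by lia.
by rewrite h.
Qed.

Lemma sig2_b Q r : (r < Q)%N -> sig2 (Q * Q + Q.+1 + r) = (r, Q).
Proof.
move=> h; rewrite /sig2 -addnA sqrt_sq; last lia.
have -> : (Q * Q + (Q.+1 + r) - Q * Q = Q.+1 + r)%N by lia.
have -> : (Q.+1 + r <= Q)%N = false by lia.
congr (_, _); lia.
Qed.

Lemma sum_shift {V : nmodType} a m (g : nat -> V) :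
  \sum_(a <= k < a + m) g k = \sum_(0 <= r < m) g (a + r)%N.
Proof.
elim: m => [|m IH]; first by rewrite addn0 !big_geq.
by rewrite addnS !big_nat_recr //= ?IH // leq_addr.
Qed.

Lemma sum_sq {V : nmodType} (f : nat -> nat -> V) Q :
  \sum_(0 <= k < Q * Q) f (sig2 k).1 (sig2 k).2 =
  \sum_(0 <= i < Q) \sum_(0 <= j < Q) f i j.
Proof.
elim: Q => [|Q IH]; first by rewrite !big_geq.
have -> : (Q.+1 * Q.+1 = Q * Q + Q.+1 + Q)%N by lia.
rewrite (@big_cat_nat _ _ _ (Q * Q)) /=.
all: try lia.
rewrite IH.
rewrite -addnA (sum_shift (Q * Q)).
rewrite (@big_cat_nat _ _ _ Q.+1 0 (Q.+1 + Q)) /=; [|lia|lia].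
rewrite -{2}[Q.+1]add0n big_addn.
have -> : (Q.+1 + Q - Q.+1 = Q)%N by lia.
have E1 : \sum_(0 <= i < Q.+1) f (sig2 (Q * Q + (0 + i))).1 (sig2 (Q * Q + (0 + i))).2
   = \sum_(0 <= i < Q.+1) f Q i.
  by apply: eq_big_nat => i /andP[_ hi]; rewrite add0n sig2_a.
have E2 : \sum_(0 <= i < Q) f (sig2 (Q * Q + (i + Q.+1))).1 (sig2 (Q * Q + (i + Q.+1))).2
   = \sum_(0 <= i < Q) f i Q.
  by apply: eq_big_nat => i /andP[_ hi]; rewrite (addnC i) addnA sig2_b.
rewrite E1 E2 [RHS]big_nat_recr //=.
rewrite (@eq_big_nat _ _ _ 0 Q (fun i => \sum_(0 <= j < Q.+1) f i j)
   (fun i => \sum_(0 <= j < Q) f i j + f i Q)); last first.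
  by move=> i _; rewrite big_nat_recr.
rewrite big_split /=.
by rewrite -!addrA; congr (_ + _); rewrite addrC.
Qed.

Lemma sum_prod {R : realType} (a b : nat -> R[i]) Q :
  \sum_(0 <= k < Q * Q) (a (sig2 k).1 * b (sig2 k).2) =
  (\sum_(0 <= i < Q) a i) * (\sum_(0 <= j < Q) b j).
Proof.
have := sum_sq (fun i j => a i * b j) Q; rewrite /= => ->.
rewrite big_distrl /=; apply: eq_bigr => i _; by rewrite big_distrr.
Qed.

Lemma sum_prodR {R : realType} (a b : nat -> R) Q :
  \sum_(0 <= k < Q * Q) (a (sig2 k).1 * b (sig2 k).2) =
  (\sum_(0 <= i < Q) a i) * (\sum_(0 <= j < Q) b j).
Proof.
have := sum_sq (fun i j => a i * b j) Q; rewrite /= => ->.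
rewrite big_distrl /=; apply: eq_bigr => i _; by rewrite big_distrr.
Qed.

Lemma prod_conv {R : realType} (a b : nat -> R[i]) (A B : R[i]) (Ba Bb : R) :
  (forall N, \sum_(0 <= i < N) cabs (a i) <= Ba) ->
  (forall N, \sum_(0 <= i < N) cabs (b i) <= Bb) ->
  (forall e, 0 < e -> exists N0, forall N, (N0 <= N)%N ->
       cabs (A - \sum_(0 <= i < N) a i) < e) ->
  (forall e, 0 < e -> exists N0, forall N, (N0 <= N)%N ->
       cabs (B - \sum_(0 <= i < N) b i) < e) ->
  forall e, 0 < e -> exists N0, forall N, (N0 <= N)%N ->
    cabs (A * B - \sum_(0 <= k < N) (a (sig2 k).1 * b (sig2 k).2)) < e.
Proof.
move=> hBa hBb hA hB e e0.
have Ba0 : 0 <= Ba by have := hBa 0%N; rewrite big_geq.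
have Bb0 : 0 <= Bb by have := hBb 0%N; rewrite big_geq.
pose T N := \sum_(0 <= k < N) (cabs (a (sig2 k).1) * cabs (b (sig2 k).2)).
have Tsplit : forall m N, (m <= N)%N ->
   T N = T m + \sum_(m <= k < N) (cabs (a (sig2 k).1) * cabs (b (sig2 k).2)).
  by move=> m N hmN; rewrite /T (@big_cat_nat _ _ _ m 0 N).
have Tmono : forall m N, (m <= N)%N -> T m <= T N.
  move=> m N hmN; rewrite (Tsplit m N hmN) lerDl.
  by apply: sumr_ge0 => k _; apply: mulr_ge0; exact: cabs_ge0.
have Tbd : forall N, T N <= Ba * Bb.
  move=> N; apply: (le_trans (Tmono N (N * N)%N _)); first nia.
  rewrite /T (sum_prodR (fun i => cabs (a i)) (fun j => cabs (b j))); apply: ler_pM => //.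
  - by apply: sumr_ge0 => *; exact: cabs_ge0.
  - by apply: sumr_ge0 => *; exact: cabs_ge0.
have Tcvg : T @ \oo --> sup (range T).
  apply: nondecreasing_cvgn; first by move=> m N h; exact: Tmono.
  by exists (Ba * Bb) => _ [N _ <-]; exact: Tbd.
have e4 : 0 < e / 4 by rewrite divr_gt0.
have [N1 _ HN1] := (cvgrPdist_lt _ _).1 Tcvg (e / 4) e4.
have Tcauchy : forall m N, (N1 <= m)%N -> (m <= N)%N -> T N - T m < e / 2.
  move=> m N h1 h2; have h3 := HN1 m h1; have h4 := HN1 N (leq_trans h1 h2).
  move: h3 h4 => /=; rewrite !ltr_distlC => /andP[? ?] /andP[? ?]; lra.
have cB0 : 0 < cabs B + 1 by have := cabs_ge0 B; lra.
have Ba10 : 0 < Ba + 1 by lra.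
have [QA hQA] := hA (e / 4 / (cabs B + 1)) (divr_gt0 e4 cB0).
have [QB hQB] := hB (e / 4 / (Ba + 1)) (divr_gt0 e4 Ba10).
pose Mx := maxn (maxn QA QB) N1.
exists (Mx * Mx)%N => N hN.
pose Q := PeanoNat.Nat.sqrt N.
have [hs1 hs2] := PeanoNat.Nat.sqrt_spec' N.
have hQQ : (Q * Q <= N)%N by rewrite /Q; lia.
have hQ : (Mx <= Q)%N.
  rewrite /Q; move: hs1 hs2; set q := PeanoNat.Nat.sqrt N => hs1 hs2; nia.
have hMx1 : (QA <= Mx)%N by rewrite /Mx; lia.
have hMx2 : (QB <= Mx)%N by rewrite /Mx; lia.
have hMx3 : (N1 <= Mx)%N by rewrite /Mx; lia.
pose SA := \sum_(0 <= i < Q) a i.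
pose SB := \sum_(0 <= i < Q) b i.
have eA := hQA Q (leq_trans hMx1 hQ).
have eB := hQB Q (leq_trans hMx2 hQ).
have SAb : cabs SA <= Ba by exact: (le_trans (cabs_sum _ _ _) (hBa Q)).
have part1 : cabs (A * B - SA * SB) < e / 2.
  have -> : A * B - SA * SB = (A - SA) * B + SA * (B - SB) by ring.
  apply: le_lt_trans (cabsD _ _) _; rewrite !cabsM.
  move: eA eB; rewrite !ltr_pdivlMr // => eA eB.
  have := cabs_ge0 (A - SA); have := cabs_ge0 B; have := cabs_ge0 SA;
  have := cabs_ge0 (B - SB); nra.
have part2 : cabs (\sum_(Q * Q <= k < N) (a (sig2 k).1 * b (sig2 k).2)) < e / 2.
  apply: le_lt_trans (cabs_sum _ _ _) _.
  under eq_bigr do rewrite cabsM.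
  have hN1 : (N1 <= Q * Q)%N by nia.
  have h := Tcauchy (Q * Q)%N N hN1 hQQ.
  by rewrite (Tsplit (Q * Q)%N N hQQ) addrAC subrr add0r in h.
rewrite (@big_cat_nat _ _ _ (Q * Q) 0 N) //= sum_prod -/SA -/SB.
rewrite opprD addrA; apply: le_lt_trans (cabsD _ _) _; rewrite cabsN.
have -> : e = e / 2 + e / 2 by field.
exact: ltrD.
Qed.

Lemma mulCE {R : realType} (a b c d : R) :
  (Complex a b) * (Complex c d) = Complex (a * c - b * d) (a * d + b * c) :> R[i].
Proof. by []. Qed.

Lemma addCE {R : realType} (a b c d : R) :
  (Complex a b) + (Complex c d) = Complex (a + c) (b + d) :> R[i].
Proof. by []. Qed.

Lemma toCD {R : realType} (x y : R) : toC (x + y) = toC x + toC y.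
Proof. by rewrite /toC addCE addr0. Qed.

Lemma cexpD {R : realType} (a b : R[i]) : cexp (a + b) = cexp a * cexp b.
Proof.
case: a => a1 a2; case: b => b1 b2.
rewrite addCE /cexp /toC /cre /cim /= !mulCE.
by congr Complex; rewrite expRD cosD sinD; ring.
Qed.

Lemma cexp0 {R : realType} : cexp (0 : R[i]) = 1.
Proof.
rewrite /cexp /toC /cre /cim /= mulCE expR0 cos0 sin0.
by congr Complex; ring.
Qed.

Lemma eeD {R : realType} (a b : R[i]) : ee (a + b) = ee a * ee b.
Proof. by rewrite /ee mulrDr cexpD. Qed.

Lemma exp_mul {R : realType} {n : nat} (S1 S2 S : 'M[R]_n) (F1 F2 F : CV R n -> R[i])
  (P1 P2 P : R -> 'rV[R]_n -> Prop) (xi : R[i])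
  (tm : 'rV[R]_n -> 'rV[R]_n -> 'rV[R]_n) :
  (forall t1 t2 z, BilC S (cv (tm t1 t2)) z = BilC S1 (cv t1) z + BilC S2 (cv t2) z) ->
  (forall n1 t1 n2 t2, P1 n1 t1 -> P2 n2 t2 -> P (n1 + n2) (tm t1 t2)) ->
  cabs xi = 1 ->
  (forall p, Hdom p -> F p = xi * (F1 p * F2 p)) ->
  has_expansion S1 F1 P1 -> has_expansion S2 F2 P2 -> has_expansion S F P.
Proof.
move=> hB hP hxi hF [c1 [nn1 [tt1 [Hc1 Hn1 Hs1]]]] [c2 [nn2 [tt2 [Hc2 Hn2 Hs2]]]].
pose t1 k (p : CV R n) := c1 k * ee (toC (nn1 k) * p.1 + BilC S1 (cv (tt1 k)) p.2).
pose t2 k (p : CV R n) := c2 k * ee (toC (nn2 k) * p.1 + BilC S2 (cv (tt2 k)) p.2).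
have key : forall i j (p : CV R n),
  xi * (c1 i * c2 j) * ee (toC (nn1 i + nn2 j) * p.1 + BilC S (cv (tm (tt1 i) (tt2 j))) p.2)
  = xi * (t1 i p * t2 j p).
  move=> i j p; rewrite /t1 /t2 hB toCD.
  have -> : (toC (nn1 i) + toC (nn2 j)) * p.1 +
      (BilC S1 (cv (tt1 i)) p.2 + BilC S2 (cv (tt2 j)) p.2) =
      (toC (nn1 i) * p.1 + BilC S1 (cv (tt1 i)) p.2) +
      (toC (nn2 j) * p.1 + BilC S2 (cv (tt2 j)) p.2) by ring.
  rewrite eeD; ring.
exists (fun k => xi * (c1 (sig2 k).1 * c2 (sig2 k).2)),
  (fun k => nn1 (sig2 k).1 + nn2 (sig2 k).2),
  (fun k => tm (tt1 (sig2 k).1) (tt2 (sig2 k).2)).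
split.
- move=> k /=; rewrite !mulf_eq0 !negb_or => /andP[_ /andP[h1 h2]].
  exact: hP (Hc1 _ h1) (Hc2 _ h2).
- move=> K cK hK.
  have [M1 [HM1 [B1 HB1]]] := Hn1 K cK hK.
  have [M2 [HM2 [B2 HB2]]] := Hn2 K cK hK.
  have [[p0 Kp0]|K0] := pselect (exists p, K p); last first.
    exists (fun _ => 0); split.
      by move=> k p Kp; exfalso; apply: K0; exists p.
    by exists 0 => N; rewrite big1.
  have M1p : forall i, 0 <= M1 i.
    by move=> i; apply: le_trans (cabs_ge0 _) (HM1 i p0 Kp0).
  have M2p : forall i, 0 <= M2 i.
    by move=> i; apply: le_trans (cabs_ge0 _) (HM2 i p0 Kp0).
  exists (fun k => M1 (sig2 k).1 * M2 (sig2 k).2); split.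
    move=> k p Kp; rewrite /= key cabsM hxi mul1r cabsM.
    by apply: ler_pM; rewrite ?cabs_ge0 //; [exact: HM1 | exact: HM2].
  exists (B1 * B2) => N.
  have HB1' : forall N, \sum_(0 <= k < N) M1 k <= B1 by move=> N0; rewrite big_mkord.
  have HB2' : forall N, \sum_(0 <= k < N) M2 k <= B2 by move=> N0; rewrite big_mkord.
  rewrite -(big_mkord xpredT (fun k => M1 (sig2 k).1 * M2 (sig2 k).2)).
  apply: (@le_trans _ _ (\sum_(0 <= k < N * N) (M1 (sig2 k).1 * M2 (sig2 k).2))).
    rewrite (@big_cat_nat _ _ _ N 0 (N * N)) //=; last nia.
    by rewrite lerDl; apply: sumr_ge0 => k _; apply: mulr_ge0.
  rewrite (sum_prodR M1 M2); apply: ler_pM => //.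
  + by apply: sumr_ge0.
  + by apply: sumr_ge0.
- move=> p hp e e0.
  have c1p : compact [set p] by exact: compact_set1.
  have h1p : forall q, [set p] q -> Hdom q by move=> q ->.
  have [M1 [HM1 [B1 HB1]]] := Hn1 _ c1p h1p.
  have [M2 [HM2 [B2 HB2]]] := Hn2 _ c1p h1p.
  have hA : forall N, \sum_(0 <= i < N) cabs (t1 i p) <= B1.
    move=> N; apply: le_trans (HB1 N); rewrite -(big_mkord xpredT M1).
    by apply: ler_sum => i _; exact: HM1.
  have hB2 : forall N, \sum_(0 <= i < N) cabs (t2 i p) <= B2.
    move=> N; apply: le_trans (HB2 N); rewrite -(big_mkord xpredT M2).
    by apply: ler_sum => i _; exact: HM2.
  have cA : forall e, 0 < e -> exists N0, forall N, (N0 <= N)%N ->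
       cabs (F1 p - \sum_(0 <= i < N) t1 i p) < e.
    by move=> e' e'0; have [N0 H] := Hs1 p hp e' e'0; exists N0 => N hN; rewrite big_mkord; exact: H.
  have cB : forall e, 0 < e -> exists N0, forall N, (N0 <= N)%N ->
       cabs (F2 p - \sum_(0 <= i < N) t2 i p) < e.
    by move=> e' e'0; have [N0 H] := Hs2 p hp e' e'0; exists N0 => N hN; rewrite big_mkord; exact: H.
  have [N0 HN0] := prod_conv (fun i => t1 i p) (fun j => t2 j p) (F1 p) (F2 p) B1 B2 hA hB2 cA cB e e0.
  exists N0 => N hN.
  rewrite hF // -(big_mkord xpredT (fun k => xi * (c1 (sig2 k).1 * c2 (sig2 k).2) *
         ee (toC (nn1 (sig2 k).1 + nn2 (sig2 k).2) * p.1 +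
            BilC S (cv (tm (tt1 (sig2 k).1) (tt2 (sig2 k).2))) p.2))).
  under eq_bigr do rewrite key.
  rewrite -mulr_sumr -mulrBr cabsM hxi mul1r.
  exact: HN0.
Qed.

Lemma cvE {R : realType} {n} (t : 'rV[R]_n) : cv t = map_mx (real_complex R) t.
Proof. by []. Qed.

Lemma mapSE {R : realType} {n} (S : 'M[R]_n) : map_mx (@toC R) S = map_mx (real_complex R) S.
Proof. by []. Qed.

Lemma BilCD {R : realType} {n} (S1 S2 : 'M[R]_n) z w :
  BilC (S1 + S2) z w = BilC S1 z w + BilC S2 z w.
Proof. by rewrite /BilC !mapSE map_mxD mulmxDr mulmxDl mxE. Qed.

Lemma QCD {R : realType} {n} (S1 S2 : 'M[R]_n) z :
  QC (S1 + S2) z = QC S1 z + QC S2 z.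
Proof. by rewrite /QC BilCD mulrDl. Qed.

Lemma BilD {R : realType} {n} (S1 S2 : 'M[R]_n) v w :
  Bil (S1 + S2) v w = Bil S1 v w + Bil S2 v w.
Proof. by rewrite /Bil mulmxDr mulmxDl mxE. Qed.

Lemma BilC_cv {R : realType} {n} (S : 'M[R]_n) t z :
  BilC S (cv t) z = (cv (t *m S) *m z^T) 0 0.
Proof. by rewrite /BilC !cvE mapSE map_mxM. Qed.

Lemma BilBl {R : realType} {n} (S : 'M[R]_n) v1 v2 w :
  Bil S (v1 - v2) w = Bil S v1 w - Bil S v2 w.
Proof. by rewrite /Bil !mulmxBl !mxE. Qed.

Lemma BilBr {R : realType} {n} (S : 'M[R]_n) v w1 w2 :
  Bil S v (w1 - w2) = Bil S v w1 - Bil S v w2.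
Proof. by rewrite /Bil linearB /= mulmxBr !mxE. Qed.

Lemma Bil_sym {R : realType} {n} (S : 'M[R]_n) v w :
  S^T = S -> Bil S v w = Bil S w v.
Proof.
move=> hS; rewrite /Bil.
have -> : (v *m S *m w^T) 0 0 = ((v *m S *m w^T)^T) 0 0.
 by rewrite [RHS]mxE.
by rewrite !trmx_mul hS trmxK mulmxA.
Qed.

Lemma Bil0 {R : realType} {n} (S : 'M[R]_n) : Bil S 0 0 = 0.
Proof. by rewrite /Bil !mul0mx mxE. Qed.

Lemma posdef_ge0 {R : realType} {n} (S : 'M[R]_n) v : sym_posdef S -> 0 <= Bil S v v.
Proof.
case=> _ hS; have [->|hv] := eqVneq v 0; first by rewrite Bil0.
exact: ltW (hS v hv).
Qed.

Lemma posdefD {R : realType} {n} (S1 S2 : 'M[R]_n) :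
  sym_posdef S1 -> sym_posdef S2 -> sym_posdef (S1 + S2).
Proof.
move=> [h1 h1'] [h2 h2']; split; first by rewrite linearD /= h1 h2.
by move=> v hv; rewrite BilD addr_gt0 // ?h1' ?h2'.
Qed.

Lemma posdef_unit {R : realType} {n} (S : 'M[R]_n) : sym_posdef S -> S \in unitmx.
Proof.
move=> [_ hS]; rewrite -row_free_unit -kermx_eq0; apply/eqP.
apply/row_matrixP => i; rewrite row0; apply/eqP; apply/negP => /negP hne.
have := hS _ hne; rewrite /Bil -row_mul mulmx_ker row0 mul0mx mxE.
by rewrite ltxx.
Qed.

Definition tmix {R : realType} {n} (S1 S2 : 'M[R]_n) (t1 t2 : 'rV[R]_n) :=
  (t1 *m S1 + t2 *m S2) *m invmx (S1 + S2).

Lemma tmixK {R : realType} {n} (S1 S2 : 'M[R]_n) t1 t2 :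
  S1 + S2 \in unitmx -> tmix S1 S2 t1 t2 *m (S1 + S2) = t1 *m S1 + t2 *m S2.
Proof. by move=> hu; rewrite /tmix -mulmxA mulVmx // mulmx1. Qed.

Lemma tmix_BilC {R : realType} {n} (S1 S2 : 'M[R]_n) t1 t2 z :
  S1 + S2 \in unitmx ->
  BilC (S1 + S2) (cv (tmix S1 S2 t1 t2)) z = BilC S1 (cv t1) z + BilC S2 (cv t2) z.
Proof. by move=> hu; rewrite !BilC_cv tmixK // !cvE map_mxD mulmxDl mxE. Qed.

Lemma tmix_Q {R : realType} {n} (S1 S2 : 'M[R]_n) t1 t2 :
  sym_posdef S1 -> sym_posdef S2 ->
  Qr (S1 + S2) (tmix S1 S2 t1 t2) <= Qr S1 t1 + Qr S2 t2.
Proof.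
move=> h1 h2; have hu := posdef_unit _ (posdefD S1 S2 h1 h2).
set t := tmix S1 S2 t1 t2.
have k : Bil S1 t1 t + Bil S2 t2 t = Bil (S1 + S2) t t.
  by rewrite /Bil /t tmixK // mulmxDl [RHS]mxE.
have g1 := posdef_ge0 S1 (t1 - t) h1; have g2 := posdef_ge0 S2 (t2 - t) h2.
rewrite !BilBl !BilBr (Bil_sym S1 t t1 h1.1) in g1.
rewrite !BilBl !BilBr (Bil_sym S2 t t2 h2.1) in g2.
have k2 := BilD S1 S2 t t; rewrite /Qr; lra.
Qed.

Lemma intrC {R : realType} (m : int) : (m%:~R : R[i]) = Complex (m%:~R) 0.
Proof. by rewrite -(rmorph_int (real_complex R)). Qed.

Lemma oneCE {R : realType} : (1 : R[i]) = Complex 1 0.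
Proof. by []. Qed.

Lemma zeroCE {R : realType} : (0 : R[i]) = Complex 0 0.
Proof. by []. Qed.

Lemma det_row1_0 (g : 'M[int]_2) : mc g = 0 -> md g = 0 -> \det g = 0.
Proof.
move=> hc hd; rewrite (expand_det_row _ i1) big1 // => j _.
case: j => [[|[|k]]] hk //.
- have -> : Ordinal hk = i0 by apply: val_inj.
  by rewrite -/(mc g) hc mul0r.
- have -> : Ordinal hk = i1 by apply: val_inj.
  by rewrite -/(md g) hd mul0r.
Qed.

Lemma jC_neq0 {R : realType} (g : 'M[int]_2) (t : R[i]) :
  inSL2 g -> 0 < cim t -> (mc g)%:~R * t + (md g)%:~R != 0.
Proof.
rewrite /inSL2; case: t => x y; rewrite /cim /= => hg hy.
rewrite !intrC mulCE addCE zeroCE; apply/negP => /eqP [] h1 h2.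
have hc : (mc g)%:~R = 0 :> R.
  have : (mc g)%:~R * y = 0 :> R by rewrite -h2; ring.
  by move/eqP; rewrite mulf_eq0 (gt_eqF hy) orbF => /eqP.
have hd : (md g)%:~R = 0 :> R by rewrite -h1 hc; ring.
move/eqP: hc; rewrite intr_eq0 => /eqP hc.
move/eqP: hd; rewrite intr_eq0 => /eqP hd.
by move: hg; rewrite det_row1_0.
Qed.

Lemma cabs0 {R : realType} (z : R[i]) : cabs z = 0 -> z = 0.
Proof.
move=> h; apply/eqP; rewrite -normr_eq0 -cabsE h; by [].
Qed.

Lemma psqrt_neq0 {R : realType} (z : R[i]) : z != 0 -> psqrt z != 0.
Proof.
move=> hz; apply/negP => /eqP h.
have [h1 h2] : Num.sqrt ((cabs z + cre z) / 2) = 0 /\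
   (if cim z < 0 then -1 else 1) * Num.sqrt ((cabs z - cre z) / 2) = 0.
  by move: h; rewrite /psqrt zeroCE => -[-> ->].
have h2' : Num.sqrt ((cabs z - cre z) / 2) = 0.
  move/eqP: h2; rewrite mulf_eq0 => /orP[|/eqP //].
  by case: ifP => _; rewrite ?oppr_eq0 oner_eq0.
move/eqP: h1; rewrite sqrtr_eq0 => h1.
move/eqP: h2'; rewrite sqrtr_eq0 => h2'.
have c0 := cabs_ge0 z.
have : cabs z = 0 by lra.
by move/cabs0 => hz0; rewrite hz0 eqxx in hz.
Qed.

Lemma mpf_neq0 {R : realType} (g : 'M[int]_2) (e t : R[i]) :
  inSL2 g -> pm1 e -> 0 < cim t -> mpf g e t != 0.
Proof.
move=> hg he ht; rewrite /mpf mulf_neq0 //; last exact/psqrt_neq0/jC_neq0.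
by case: he => ->; rewrite ?oppr_eq0 oner_eq0.
Qed.

Lemma psqrt1 {R : realType} : psqrt (1 : R[i]) = 1.
Proof.
have c1 : cabs (1 : R[i]) = 1 := cabs1.
rewrite /psqrt c1 oneCE /cre /cim /= ltxx.
have -> : (1 + 1) / 2 = 1 :> R by field.
by rewrite subrr mul0r sqrtr0 sqrtr1 mulr0.
Qed.

Lemma mob1 {R : realType} (t : R[i]) : mob 1%:M t = t.
Proof.
rewrite /mob /ma /mb /mc /md !mxE /=.
by rewrite mul1r addr0 mul0r add0r divr1.
Qed.

Lemma ciE {R : realType} : cim (ci R) = 1.
Proof. by []. Qed.

Lemma mp_eps_1 {R : realType} (g : 'M[int]_2) (e : R[i]) :
  inSL2 g -> mp_eps g e 1%:M 1 = e.
Proof.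
move=> hg; rewrite /mp_eps mob1 mulmx1 /mpf /mc /md !mxE /=.
rewrite mul0r add0r psqrt1 !mul1r mulr1.
have := @jC_neq0 R g (ci R) hg; rewrite ciE ltr01 => /(_ isT) hj.
have hp := psqrt_neq0 _ hj.
by rewrite mulfK.
Qed.

Lemma inL0 {R : realType} {n} (Bs : 'M[R]_n) : inL Bs 0.
Proof.
exists 0; have -> : map_mx (fun m : int => m%:~R) (0 : 'rV[int]_n) = 0 :> 'rV[R]_n.
  by apply/matrixP => i j; rewrite !mxE.
by rewrite mul0mx.
Qed.

Lemma inLD {R : realType} {n} (Bs : 'M[R]_n) v w :
  inL Bs v -> inL Bs w -> inL Bs (v + w).
Proof.
move=> [x ->] [y ->]; exists (x + y).
have -> : map_mx (fun m : int => m%:~R) (x + y) =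
   map_mx (fun m : int => m%:~R) x + map_mx (fun m : int => m%:~R) y :> 'rV[R]_n.
  by apply/matrixP => i j; rewrite !mxE intrD.
by rewrite mulmxDl.
Qed.

Lemma inLZ {R : realType} {n} (Bs : 'M[R]_n) (a : int) v :
  inL Bs v -> inL Bs (a%:~R *: v).
Proof.
move=> [x ->]; exists (a *: x).
have -> : map_mx (fun m : int => m%:~R) (a *: x) =
   a%:~R *: map_mx (fun m : int => m%:~R) x :> 'rV[R]_n.
  by apply/matrixP => i j; rewrite !mxE intrM.
by rewrite scalemxAl.
Qed.

Lemma inL_actv {R : realType} {n} (Bs : 'M[R]_n) v w g :
  inL Bs v -> inL Bs w -> inL Bs (actv v w g).
Proof. by move=> hv hw; apply: inLD; apply: inLZ. Qed.

Lemma inL_actw {R : realType} {n} (Bs : 'M[R]_n) v w g :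
  inL Bs v -> inL Bs w -> inL Bs (actw v w g).
Proof. by move=> hv hw; apply: inLD; apply: inLZ. Qed.

Lemma ipiE {R : realType} (x : R) : toC pi * ci R * toC x = Complex 0 (pi * x).
Proof. by rewrite /toC /ci !mulCE; congr Complex; ring. Qed.

Lemma cexp_i {R : realType} (x : R) : cexp (Complex 0 x) = Complex (cos x) (sin x).
Proof. by rewrite /cexp /cre /cim /= expR0 /toC mulCE; congr Complex; ring. Qed.

Lemma cos_sin_nat {R : realType} (k : nat) :
  cos (pi * k%:R) = (-1) ^+ k :> R /\ sin (pi * k%:R) = 0 :> R.
Proof.
elim: k => [|k [hc hs]]; first by rewrite mulr0 cos0 sin0.
have -> : (k.+1)%:R = k%:R + 1 :> R by rewrite natr1.
rewrite mulrDr mulr1 cosDpi sinDpi hc hs oppr0 exprS; split => //; ring.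
Qed.

Lemma sign_pm1 {R : realType} (k : nat) : (-1) ^+ k = 1 :> R \/ (-1) ^+ k = -1 :> R.
Proof.
elim: k => [|k [h|h]]; first by left; rewrite expr0.
  by right; rewrite exprS h mulr1.
by left; rewrite exprS h mulrNN mulr1.
Qed.

Lemma pm1_cexp_int {R : realType} (m : int) :
  pm1 (cexp (toC pi * ci R * toC (m%:~R))).
Proof.
rewrite ipiE cexp_i.
have [c s] : (cos (pi * m%:~R) = 1 :> R \/ cos (pi * m%:~R) = -1 :> R) /\
             sin (pi * m%:~R) = 0 :> R.
  case: m => k.
    have [hc hs] := @cos_sin_nat R k.
    rewrite /= hs; split => //; rewrite hc; exact: sign_pm1.
  have [hc hs] := @cos_sin_nat R k.+1.
  rewrite NegzE mulrN cosN sinN /= hs oppr0; split => //; rewrite hc; exact: sign_pm1.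
rewrite s; case: c => ->; [left|right]; first by [].
by rewrite -[X in Complex _ X]oppr0.
Qed.

Lemma Bilx0 {R : realType} {n} (S : 'M[R]_n) v : Bil S v 0 = 0.
Proof. by rewrite /Bil trmx0 mulmx0 mxE. Qed.

Lemma Bil0x {R : realType} {n} (S : 'M[R]_n) v : Bil S 0 v = 0.
Proof. by rewrite /Bil !mul0mx mxE. Qed.

Lemma jmul_xi {R : realType} {n} (S : 'M[R]_n) g e v w xi :
  inSL2 g -> jmul S (JE g e v w 1) (JE 1%:M 1 0 0 xi) = JE g e v w xi.
Proof.
move=> hg; rewrite /jmul /=; congr JE.
- exact: mulmx1.
- exact: mp_eps_1.
- by rewrite /actv /ma /mc !mxE /= rmorph1 scale1r scale0r !addr0.
- by rewrite /actw /mb /md !mxE /= rmorph1 scale1r scale0r add0r addr0.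
- rewrite Bilx0 Bil0x subrr.
  have -> : toC (0 : R) = 0 by [].
  by rewrite mulr0 cexp0 mulr1 mul1r.
Qed.

Lemma in_grp_center {R : realType} {n} (G : 'M[int]_2 -> Prop) (Bs : 'M[R]_n) xi :
  fi_subgroup G -> pm1 xi -> in_grp G Bs (JE 1%:M 1 0 0 xi).
Proof.
case=> _ hG1 _ _ _ hxi; split => //=; last exact: inL0; last exact: inL0.
  by split => //; rewrite /inSL2 det1.
by left.
Qed.

Lemma in_grp1 {R : realType} {n} {G : 'M[int]_2 -> Prop} {Bs : 'M[R]_n} {g e v w xi} :
  in_grp G Bs (JE g e v w xi) -> in_grp G Bs (JE g e v w 1).
Proof. by case=> *; split => //; left. Qed.

Lemma chi_xi {R : realType} {n} (S Bs : 'M[R]_n) (G : 'M[int]_2 -> Prop) chi g e v w xi :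
  fi_subgroup G -> is_lin_char S Bs G chi -> center_cond chi ->
  in_grp G Bs (JE g e v w 1) -> pm1 xi ->
  chi (JE g e v w xi) = chi (JE g e v w 1) * xi.
Proof.
move=> hG [_ hm] hc hx hxi.
have hg : inSL2 g by case: hx => -[].
rewrite -{1}(jmul_xi S g e v w xi hg) hm //; first by rewrite hc.
exact: in_grp_center.
Qed.

Lemma pm1_sq {R : realType} (c : R[i]) : pm1 c -> c * c = 1.
Proof. by case=> ->; rewrite ?mulrNN mulr1. Qed.

Lemma pm1_neq0 {R : realType} (c : R[i]) : pm1 c -> c != 0.
Proof. by case=> ->; rewrite ?oppr_eq0 oner_eq0. Qed.

Lemma part1 {R : realType} {n} (S1 S2 Bs : 'M[R]_n) (G : 'M[int]_2 -> Prop) chi1 chi2 :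
  fi_subgroup G -> integral_on S1 Bs -> integral_on S2 Bs ->
  is_lin_char S1 Bs G chi1 -> center_cond chi1 ->
  is_lin_char S2 Bs G chi2 -> center_cond chi2 ->
  is_lin_char (S1 + S2) Bs G (chi_star chi1 chi2).
Proof.
move=> hG hI1 hI2 hl1 hc1 hl2 hc2; split.
  move=> [g e v w xi] hx; rewrite /chi_star /=.
  have hx' := in_grp1 hx.
  have hxi : pm1 xi by case: hx.
  rewrite !mulf_neq0 //; [exact: pm1_neq0 | exact: hl1.1 | exact: hl2.1].
move=> [g1 e1 v1 w1 xi1] [g2 e2 v2 w2 xi2] hx hy.
have hx' := in_grp1 hx; have hy' := in_grp1 hy.
have [[_ _] _ hv1 hw1 hxi1] := hx.
have [[_ _] _ hv2 hw2 hxi2] := hy.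
pose V1 := actv v1 w1 g2; pose W1 := actw v1 w1 g2.
have hV1 : inL Bs V1 by exact: inL_actv.
have hW1 : inL Bs W1 by exact: inL_actw.
pose cS S := cexp (toC pi * ci R * toC (Bil S V1 w2 - Bil S v2 W1)).
have pmc : forall S, integral_on S Bs -> pm1 (cS S).
  move=> S hI; have [m hm] := hI _ _ hV1 hw2; have [m' hm'] := hI _ _ hv2 hW1.
  by rewrite /cS hm hm' -intrB; exact: pm1_cexp_int.
have key : forall S chi, integral_on S Bs -> is_lin_char S Bs G chi -> center_cond chi ->
   chi (JE (g1 *m g2) (mp_eps g1 e1 g2 e2) (V1 + v2) (W1 + w2) 1) =
   chi (JE g1 e1 v1 w1 1) * chi (JE g2 e2 v2 w2 1) * cS S.
  move=> S chi hI hl hc.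
  have ey : jmul S (JE g1 e1 v1 w1 1) (JE g2 e2 v2 w2 (cS S)) =
      JE (g1 *m g2) (mp_eps g1 e1 g2 e2) (V1 + v2) (W1 + w2) 1.
    by rewrite /jmul /= mul1r pm1_sq //; exact: pmc.
  have hy'' : in_grp G Bs (JE g2 e2 v2 w2 (cS S)).
    by case: hy' => *; split => //; exact: pmc.
  rewrite -ey hl.2 // (@chi_xi _ _ S Bs G chi _ _ _ _ _ hG hl hc hy') ?mulrA //; exact: pmc.
have cSD : cS (S1 + S2) = cS S1 * cS S2.
  rewrite /cS -cexpD -mulrDr -toCD !BilD; congr (cexp (_ * toC _)); ring.
rewrite /chi_star /jmul /= -/V1 -/W1 -/(cS (S1 + S2)) (key S1 chi1 hI1 hl1 hc1) (key S2 chi2 hI2 hl2 hc2) cSD.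
have s1 := pm1_sq _ (pmc _ hI1); have s2 := pm1_sq _ (pmc _ hI2).
set a := cS S1 in s1 *; set b := cS S2 in s2 *.
have -> : xi1 * xi2 * (a * b) *
  (chi1 (JE g1 e1 v1 w1 1) * chi1 (JE g2 e2 v2 w2 1) * a) *
  (chi2 (JE g1 e1 v1 w1 1) * chi2 (JE g2 e2 v2 w2 1) * b) =
  xi1 * xi2 * (a * a) * (b * b) *
  (chi1 (JE g1 e1 v1 w1 1) * chi1 (JE g2 e2 v2 w2 1)) *
  (chi2 (JE g1 e1 v1 w1 1) * chi2 (JE g2 e2 v2 w2 1)) by ring.
rewrite s1 s2; ring.
Qed.

Lemma arg_split {R : realType} (c j t a1 a2 b1 b2 d1 d2 e1 e2 : R[i]) :
  - (c * (a1 + a2) / j) + t * (b1 + b2) + (d1 + d2) + (e1 + e2) / 2 =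
  (- (c * a1 / j) + t * b1 + d1 + e1 / 2) + (- (c * a2 / j) + t * b2 + d2 + e2 / 2).
Proof. by rewrite !mulrDr !mulrDl; ring. Qed.

Lemma slash_mul {R : realType} {n} (m1 m2 : int) (S1 S2 : 'M[R]_n) f1 f2 (x : jelt R n) p :
  inSL2 (el_g x) -> pm1 (el_eps x) -> Hdom p ->
  slash (m1 + m2) (S1 + S2) (fun q => f1 q * f2 q) x p =
  el_xi x * (slash m1 S1 f1 (JE (el_g x) (el_eps x) (el_v x) (el_w x) 1) p *
             slash m2 S2 f2 (JE (el_g x) (el_eps x) (el_v x) (el_w x) 1) p).
Proof.
case: x => g e v w xi /= hg he hp; rewrite /slash /=.
have hmp : mpf g e p.1 \is a GRing.unit by rewrite unitfE mpf_neq0.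
rewrite opprD exprzDr // !QCD !BilCD arg_split eeD.
ring.
Qed.

Lemma holo_mul {R : realType} {n} (f1 f2 : CV R n -> R[i]) :
  holo f1 -> holo f2 -> holo (fun p => f1 p * f2 p).
Proof. move=> h1 h2 p hp; exact: differentiableM (h1 p hp) (h2 p hp). Qed.

Theorem proposition2p12 (R : realType) (n : nat) (m1 m2 : int)
    (S1 S2 Bs : 'M[R]_n) (G : 'M[int]_2 -> Prop)
    (chi1 chi2 : jelt R n -> R[i]) (f1 f2 : CV R n -> R[i]) :
  Bs \in unitmx ->
  sym_posdef S1 -> sym_posdef S2 ->
  integral_on S1 Bs -> integral_on S2 Bs ->
  fi_subgroup G ->
  is_lin_char S1 Bs G chi1 -> fi_kernel S1 Bs G chi1 -> center_cond chi1 ->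
  is_lin_char S2 Bs G chi2 -> fi_kernel S2 Bs G chi2 -> center_cond chi2 ->
  is_lin_char (S1 + S2) Bs G (chi_star chi1 chi2) /\
  (jacobi_form m1 S1 Bs G chi1 f1 -> jacobi_form m2 S2 Bs G chi2 f2 ->
     jacobi_form (m1 + m2) (S1 + S2) Bs G (chi_star chi1 chi2) (fun p => f1 p * f2 p) /\
     (jacobi_cusp_form m1 S1 Bs G chi1 f1 \/ jacobi_cusp_form m2 S2 Bs G chi2 f2 ->
      jacobi_cusp_form (m1 + m2) (S1 + S2) Bs G (chi_star chi1 chi2)
        (fun p => f1 p * f2 p))).
Proof.
move=> hBs h1 h2 hI1 hI2 hG hl1 _ hc1 hl2 _ hc2.
split; first exact: part1.
have hu := posdef_unit _ (posdefD S1 S2 h1 h2).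
move=> [hh1 ht1 he1] [hh2 ht2 he2].
have holo12 := holo_mul _ _ hh1 hh2.
have tr : forall x, in_grp G Bs x -> forall p, Hdom p ->
    slash (m1 + m2) (S1 + S2) (fun q => f1 q * f2 q) x p =
    chi_star chi1 chi2 x * (f1 p * f2 p).
  move=> [g e v w xi] hx p hp; have [[_ hg] he _ _ _] := hx.
  have hx' := in_grp1 hx.
  rewrite slash_mul //= (ht1 _ hx') // (ht2 _ hx') // /chi_star /=; ring.
have ex : forall (P1' P2' P' : R -> 'rV[R]_n -> Prop),
    (forall n1 t1 n2 t2, P1' n1 t1 -> P2' n2 t2 -> P' (n1 + n2) (tmix S1 S2 t1 t2)) ->
    (forall x, in_grp inSL2 Bs x -> has_expansion S1 (slash m1 S1 f1 x) P1') ->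
    (forall x, in_grp inSL2 Bs x -> has_expansion S2 (slash m2 S2 f2 x) P2') ->
    forall x, in_grp inSL2 Bs x ->
      has_expansion (S1 + S2) (slash (m1 + m2) (S1 + S2) (fun q => f1 q * f2 q) x) P'.
  move=> P1' P2' P' hP E1 E2 x hx; have [[_ hg] he _ _ hxi] := hx.
  apply: (@exp_mul R n S1 S2 (S1 + S2) _ _ _ P1' P2' P' (el_xi x) (tmix S1 S2)).
  - by move=> t1 t2 z; exact: tmix_BilC.
  - exact: hP.
  - exact: cabs_pm1.
  - by move=> p hp; exact: slash_mul.
  - by apply: E1; move: hx; case: x {hg he hxi} => g e v w xi /= hx; exact: in_grp1 hx.
  - by apply: E2; move: hx; case: x {hg he hxi} => g e v w xi /= hx; exact: in_grp1 hx.
pose Le S := fun (m : R) (t : 'rV[R]_n) => Qr S t <= m.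
pose Lt S := fun (m : R) (t : 'rV[R]_n) => Qr S t < m.
split.
  split; [exact: holo12 | exact: tr | ].
  apply: (ex (Le S1) (Le S2) (Le (S1 + S2))) => // n1 t1 n2 t2 q1 q2.
  have := tmix_Q S1 S2 t1 t2 h1 h2; rewrite /Le in q1 q2 *; lra.
case=> [[_ _ hc]|[_ _ hc]]; (split; [exact: holo12 | exact: tr | ]).
  apply: (ex (Lt S1) (Le S2) (Lt (S1 + S2))) => // n1 t1 n2 t2 q1 q2.
  have := tmix_Q S1 S2 t1 t2 h1 h2; rewrite /Le /Lt in q1 q2 *; lra.
apply: (ex (Le S1) (Lt S2) (Lt (S1 + S2))) => // n1 t1 n2 t2 q1 q2.
have := tmix_Q S1 S2 t1 t2 h1 h2; rewrite /Le /Lt in q1 q2 *; lra.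
Qed.
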